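(* Let $A\in\mathcal{A}_{n,1}$ and let $(k;a_1,\dots,a_n;b,\beta)$ be the generalized inversion table of $\Lambda(A)$. Then the generalized inversion table of $\Lambda(A')$ is $(k;a_1,\dots,a_n;b,\beta')$ with $\beta'=b-\beta+a_k-a_{k-1}-1$.
   Context: An alternating sign matrix (ASM) of order $n$ is an $n\times n$ matrix $A=(a_{ij})$ with entries in $\{-1,0,1\}$ such that in every row and every column the nonzero entries alternate in sign, the first and the last nonzero entries being $1$. $\mathcal{A}_{n,1}$ denotes the set of order-$n$ ASMs having exactly one entry equal to $-1$. For an ASM $A=(a_{ij})$, $\overline{A}=(a_{i,n+1-j})$ is the vertical reflection of $A$. Let $A\in\mathcal{A}_{n,1}$. The opening column is the column containing the unique $-1$; the closing row is the row containing the $-1$; the opening row is the row of the $1$ of the opening column lying above the $-1$. The columns strictly to the left (resp. right) of the opening column form the left side (resp. right side). The closing row contains exactly two $1$'s, one in each side; the one in the right side is the closing $1$ and its column is the closing column. The rows strictly between the opening row and the closing row are the enclosed rows. $A$ is neutral if there are no enclosed rows; otherwise $A$ is positive if the $1$ of the lowest enclosed row lies in the right side, and negative if it lies in the left side. $\mathcal{A}_{n,1}^{+},\mathcal{A}_{n,1}^{0},\mathcal{A}_{n,1}^{-}$ denote the sets of positive, neutral, negative elements of $\mathcal{A}_{n,1}$; $A$ is negative iff $\overline{A}$ is positive. For $A\in\mathcal{A}_{n,1}^{+}\cup\mathcal{A}_{n,1}^{0}$: the charged cell is the intersection of the enclosed rows with the right side; the extended neutral cell is the intersection of the rows from the opening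 row to the closing row (inclusive) with the left side. The leading $1$ is the highest $1$ in the left side strictly below the opening row; its column is the leading column; the leading cell consists of the entries strictly below the opening row and strictly between the leading column and the opening column, and $\ell(A)$ is the sum of its entries. The closing cell consists of the entries strictly below the closing row and strictly between the opening column and the closing column, and $c(A)$ is the sum of its entries; the extended closing cell consists of the entries strictly below the closing row in the columns from the opening column to the closing column inclusive. If $A$ is positive, $E(A)$ is the sum of the entries of the charged cell; if $A$ is neutral, $E(A)=0$. Horizontal displacement: for an $m\times q$ $(0,1)$-matrix $P$ whose nonzero columns are $j_1<\dots<j_t$ with $j_1=1$ and $j_t<q$, $H(P)$ is the $m\times q$ matrix whose column $j_{s+1}$ equals column $j_s$ of $P$ for $1\le s\le t$ (where $j_{t+1}=q$), all other columns being zero. Vertical displacement: for an $m\times q$ $(0,1)$-matrix $P$ whose nonzero rows are $i_1<\dots<i_t$ with $i_1>1$ and $i_t=m$, $V(P)$ is the $m\times q$ matrix whose row $i_{s-1}$ equals row $i_s$ of $P$ for $1\le s\le t$ (where $i_0=1$), all other rows being zero. Partial discharging procedure: for $A\in\mathcal{A}_{n,1}^{+}\cup\mathcal{A}_{n,1}^{0}$, $\delta(A)$ is obtained by applying successively the following steps (all cells, rows and columns referring to the positions they occupy in $A$): (1) replace the $-1$ and the closing $1$ by $0$; (2) replace the submatrix occupying the extended closing cell by its image under $H$; (3) replace the submatrix occupying the extended neutral cell by its image under $V$; (4) lower the entries of the extended neutral cell and of the charged cell by one row: in the left side, for each row $t$ strictly below the opening row up to and including the closing row, the left part of row $t$ becomes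 the former left part of row $t-1$, and the left part of the opening row becomes zero; in the right side, for each row $t$ from two rows below the opening row up to and including the closing row, the right part of row $t$ becomes the former right part of row $t-1$, and the right part of the row immediately below the opening row becomes zero. The complete discharging procedure is $\Delta(A)=(k,\delta(A),c(A),E(A))$, where $k$ is the index of the opening row of $A$. It is known that $\Delta$ is injective on $\mathcal{A}_{n,1}^{+}\cup\mathcal{A}_{n,1}^{0}$, and that whenever $\Delta(A)=(k,P,c,E)$, there is a unique $N\in\mathcal{A}_{n,1}^{+}\cup\mathcal{A}_{n,1}^{0}$ with $\Delta(N)=(k,P,c+E,0)$, and this $N$ is neutral. Neutralizing procedure $\Lambda$: for $A\in\mathcal{A}_{n,1}^{+}\cup\mathcal{A}_{n,1}^{0}$ with $\Delta(A)=(k,P,c,E)$, $\Lambda(A)=(N,E)$ where $N$ is the unique element with $\Delta(N)=(k,P,c+E,0)$. For $A\in\mathcal{A}_{n,1}^{-}$, write $\Lambda(\overline{A})=(M,-E)$ and set $\Lambda(A)=(\overline{M},E)$. It is known that $\Lambda$ is a bijection from $\mathcal{A}_{n,1}$ onto $\mathcal{N}_{n,1}=\{(N,E)\,:\,N\in\mathcal{A}_{n,1}^{0},\ E\in\mathbb{Z},\ -\ell(N)\le E\le c(N)\}$. The map $\xi:\mathcal{N}_{n,1}\to\mathcal{N}_{n,1}$ is $\xi(N,E)=(N,\,c(N)-\ell(N)-E)$, and for $A\in\mathcal{A}_{n,1}$, $A'=\Lambda^{-1}(\xi(\Lambda(A)))$. Generalized inversion table: for $(N,E)\in\mathcal{N}_{n,1}$,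 let $n+1-k$ be the index of the opening row of $N$ (so the closing row is row $n+2-k$). For $1\le i\le n$, $a_i$ is the sum of the entries of $N$ lying strictly below row $n+1-i$ and strictly to the left of the unique $1$ of row $n+1-i$ (for $i=k-1$, i.e. the closing row, the leftmost $1$ of that row is used). Let $b=c(N)$ and $\beta=E+\ell(N)$. The generalized inversion table of $(N,E)$ is $(k;a_1,\dots,a_n;b,\beta)$. *)

(* Defs.v *)
(* Matrices are 'M[int]_n; all row/column indices in the
   definitions below are 1-based natural numbers, accessed through [ent]. *)
From HB Require Import structures.
From mathcomp Require Import all_boot all_order all_algebra.
Set Implicit Arguments. Unset Strict Implicit. Unset Printing Implicit Defensive.
Import Order.TTheory GRing.Theory Num.Theory.

(* 1-based entry access; 0 outside the matrix *)
Definition ent {n} (A : 'M[int]_n) (i j : nat) : int :=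
  match (insub i.-1 : option 'I_n), (insub j.-1 : option 'I_n) with
  | Some i', Some j' => if (0 < i) && (0 < j) then A i' j' else 0%R
  | _, _ => 0%R
  end.

Definition mkmx n (f : nat -> nat -> int) : 'M[int]_n :=
  \matrix_(i < n, j < n) f i.+1 j.+1.

Definition rng (a b : nat) : seq nat := iota a (b.+1 - a).

(* a line of an ASM: entries in {-1,0,1}, nonzero entries alternate in sign,
   the first and the last nonzero entries are 1 *)
Definition alt_ok (s : seq int) : bool :=
  all (fun x => (x == 1%R) || (x == 0%R) || (x == (-1)%R)) s &&
  (let nz := [seq x <- s | x != 0%R] in
   [&& head 0%R nz == 1%R, last 0%R nz == 1%R &
       sorted (fun x y => y == (- x)%R) nz]).

Definition rowseq {n} (A : 'M[int]_n) i := [seq ent A i j | j <- rng 1 n].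
Definition colseq {n} (A : 'M[int]_n) j := [seq ent A i j | i <- rng 1 n].

Definition isASM {n} (A : 'M[int]_n) : bool :=
  all (fun i => alt_ok (rowseq A i)) (rng 1 n) &&
  all (fun j => alt_ok (colseq A j)) (rng 1 n).

Definition negcount {n} (A : 'M[int]_n) : nat :=
  \sum_(i <- rng 1 n) \sum_(j <- rng 1 n) (ent A i j == (-1)%R).

Definition inA1 {n} (A : 'M[int]_n) : bool := isASM A && (negcount A == 1).

Definition crow {n} (A : 'M[int]_n) : nat :=
  nth 0 [seq i <- rng 1 n | has (fun j => ent A i j == (-1)%R) (rng 1 n)] 0.
Definition ocol {n} (A : 'M[int]_n) : nat :=
  nth 0 [seq j <- rng 1 n | ent A (crow A) j == (-1)%R] 0.
Definition orow {n} (A : 'M[int]_n) : nat :=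
  last 0 [seq i <- rng 1 (crow A).-1 | ent A i (ocol A) == 1%R].
Definition ccol {n} (A : 'M[int]_n) : nat :=
  nth 0 [seq j <- rng (ocol A).+1 n | ent A (crow A) j == 1%R] 0.

Definition has1 {n} (A : 'M[int]_n) (i : nat) (js : seq nat) : bool :=
  has (fun j => ent A i j == 1%R) js.

(* no enclosed rows *)
Definition neutral {n} (A : 'M[int]_n) : bool := crow A == (orow A).+1.
Definition positive {n} (A : 'M[int]_n) : bool :=
  ((orow A).+1 < crow A) && has1 A (crow A).-1 (rng (ocol A).+1 n).
Definition negative {n} (A : 'M[int]_n) : bool :=
  ((orow A).+1 < crow A) && has1 A (crow A).-1 (rng 1 (ocol A).-1).

Definition cellsum {n} (A : 'M[int]_n) (r1 r2 c1 c2 : nat) : int :=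
  (\sum_(i <- rng r1 r2) \sum_(j <- rng c1 c2) ent A i j)%R.

Definition Echarge {n} (A : 'M[int]_n) : int :=
  if positive A then cellsum A (orow A).+1 (crow A).-1 (ocol A).+1 n else 0%R.

Definition leadrow {n} (A : 'M[int]_n) : nat :=
  nth 0 [seq i <- rng (orow A).+1 n | has1 A i (rng 1 (ocol A).-1)] 0.
Definition leadcol {n} (A : 'M[int]_n) : nat :=
  nth 0 [seq j <- rng 1 (ocol A).-1 | ent A (leadrow A) j == 1%R] 0.
Definition ell {n} (A : 'M[int]_n) : int :=
  cellsum A (orow A).+1 n (leadcol A).+1 (ocol A).-1.
Definition cc {n} (A : 'M[int]_n) : int :=
  cellsum A (crow A).+1 n (ocol A).+1 (ccol A).-1.

Definition Hdisp (m q : nat) (P : nat -> nat -> int) : nat -> nat -> int :=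
  let js := [seq j <- rng 1 q | has (fun i => P i j != 0%R) (rng 1 m)] in
  let tg := rcons (behead js) q in
  fun i j => if j \in tg then P i (nth 0 js (index j tg)) else 0%R.

Definition Vdisp (m q : nat) (P : nat -> nat -> int) : nat -> nat -> int :=
  let rs := [seq i <- rng 1 m | has (fun j => P i j != 0%R) (rng 1 q)] in
  let tg := belast 1 rs in
  fun i j => if i \in tg then P (nth 0 rs (index i tg)) j else 0%R.

Definition replace (f : nat -> nat -> int) (r1 c1 m q : nat)
    (g : nat -> nat -> int) : nat -> nat -> int :=
  fun i j => if (r1 <= i < r1 + m) && (c1 <= j < c1 + q)
             then g (i - r1).+1 (j - c1).+1 else f i j.

Definition subf (f : nat -> nat -> int) (r1 c1 : nat) : nat -> nat -> int :=
  fun i j => f (r1 + i.-1) (c1 + j.-1).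

Definition delta {n} (A : 'M[int]_n) : 'M[int]_n :=
  let k := orow A in let r := crow A in let o := ocol A in let cl := ccol A in
  let f0 := ent A in
  let f1 := fun i j => if (i == r) && ((j == o) || (j == cl)) then 0%R
                       else f0 i j in
  let m2 := n - r in let q2 := cl.+1 - o in
  let f2 := replace f1 r.+1 o m2 q2 (Hdisp m2 q2 (subf f1 r.+1 o)) in
  let m3 := r.+1 - k in let q3 := o.-1 in
  let f3 := replace f2 k 1 m3 q3 (Vdisp m3 q3 (subf f2 k 1)) in
  let f4 := fun i j =>
    if (0 < j) && (j < o) then
      (if (k < i) && (i <= r) then f3 i.-1 j
       else if i == k then 0%R else f3 i j)
    else if o < j then
      (if (k.+1 < i) && (i <= r) then f3 i.-1 j
       else if i == k.+1 then 0%R else f3 i j)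
    else f3 i j in
  mkmx n f4.

Definition Delta {n} (A : 'M[int]_n) : nat * 'M[int]_n * int * int :=
  (orow A, delta A, cc A, Echarge A).

Definition flip {n} (A : 'M[int]_n) : 'M[int]_n :=
  \matrix_(i < n, j < n) A i (rev_ord j).

Definition inPN {n} (A : 'M[int]_n) : bool :=
  inA1 A && (positive A || neutral A).

Definition LambdaPN {n} (A N : 'M[int]_n) (E : int) : Prop :=
  [/\ inPN A, inPN N, E = Echarge A &
      Delta N = (orow A, delta A, (cc A + Echarge A)%R, 0%R)].

(* Lambda(A) = (N, E), as a relation (the paper shows it is a function) *)
Definition LambdaRel {n} (A N : 'M[int]_n) (E : int) : Prop :=
  LambdaPN A N E \/
  [/\ inA1 A, negative A & LambdaPN (flip A) (flip N) (- E)%R].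

Definition xi {n} (p : 'M[int]_n * int) : 'M[int]_n * int :=
  (p.1, (cc p.1 - ell p.1 - p.2)%R).

Definition ga {n} (N : 'M[int]_n) (i : nat) : int :=
  let r := n.+1 - i in
  let col := nth 0 [seq j <- rng 1 n | ent N r j == 1%R] 0 in
  cellsum N r.+1 n 1 col.-1.

Definition gtable {n} (p : 'M[int]_n * int) : nat * seq int * int * int :=
  let N := p.1 in
  (n.+1 - orow N, [seq ga N i | i <- rng 1 n], cc N, (p.2 + ell N)%R).

(* Main.v *)
Require Import Defs.
From mathcomp Require Import all_boot all_order all_algebra zify.
Set Implicit Arguments. Unset Strict Implicit. Unset Printing Implicit Defensive.
Import Order.TTheory GRing.Theory Num.Theory.
Lemma ent_def n (A : 'M[int]_n) i j (Hi : i.-1 < n) (Hj : j.-1 < n) :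
  ent A i j = if (0 < i) && (0 < j) then A (Ordinal Hi) (Ordinal Hj) else 0%R.
Proof.
have ins k (Hk : k < n) : insub k = Some (Ordinal Hk).
  by case: insubP => [u _ eu|]; [congr Some; apply: val_inj|rewrite Hk].
by rewrite /ent ins ins.
Qed.

Lemma insN n k : ~~ (k < n) -> (insub k : option 'I_n) = None.
Proof. by move=> H; case: insubP => // u; rewrite (negbTE H). Qed.
Lemma ent_outi n (A : 'M[int]_n) i j : ~~ (i.-1 < n) -> ent A i j = 0%R.
Proof. by move=> H; rewrite /ent insN. Qed.
Lemma ent_outj n (A : 'M[int]_n) i j : ~~ (j.-1 < n) -> ent A i j = 0%R.
Proof. by move=> H; rewrite /ent (insN H); case: insub. Qed.

Lemma ent_j0 n (A : 'M[int]_n) i : ent A i 0 = 0%R.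
Proof. rewrite /ent; case: (insub i.-1 : option 'I_n) => [?|] //; case: (insub 0.-1 : option 'I_n) => [?|] //; by rewrite andbF. Qed.

Lemma ent_out n (A : 'M[int]_n) i j :
  ent A i j != 0%R -> (0 < i <= n) && (0 < j <= n).
Proof.
case: (ltnP i.-1 n) => Hi; last by rewrite ent_outi // -leqNgt.
case: (ltnP j.-1 n) => Hj; last by rewrite ent_outj // -leqNgt.
rewrite (ent_def A Hi Hj); case: i Hi => // i Hi; case: j Hj => // j Hj _.
rewrite /= in Hi Hj *; lia.
Qed.

Lemma ent_flip n (M : 'M[int]_n) i j :
  ent (flip M) i j = ent M i (n.+1 - j).
Proof.
case: (ltnP i.-1 n) => Hi; last by rewrite !ent_outi // -leqNgt.
case: (ltnP j.-1 n) => Hj; last first.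
  rewrite ent_outj -?leqNgt //.
  case: j Hj => [|j] Hj; first by rewrite subn0 ent_outj //= ltnn.
  by rewrite subSS /= in Hj *; rewrite (_ : n - j = 0) ?ent_j0 //; lia.
case: j Hj => [|j] Hj; first by rewrite !ent_j0 subn0 ent_outj //= ltnn.
have Hj' : (n.+1 - j.+1).-1 < n by lia.
rewrite (ent_def _ Hi Hj) (ent_def _ Hi Hj') /=.
have -> : 0 < n.+1 - j.+1 by lia.
rewrite andbT /flip mxE; case: (0 < i) => //; congr (M _ _); apply: val_inj => /=; lia.
Qed.
Lemma mem_rng a b x : (x \in rng a b) = (a <= x <= b).
Proof. rewrite /rng mem_iota; apply/idP/idP; lia. Qed.

Lemma rng_uniq a b : uniq (rng a b).
Proof. exact: iota_uniq. Qed.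

Lemma rng_cons a b : a <= b -> rng a b = a :: rng a.+1 b.
Proof. by move=> h; rewrite /rng (_ : b.+1 - a = (b.+1 - a.+1).+1) //; lia. Qed.

Lemma rng_split a m b : 0 < m -> a <= m <= b ->
  rng a b = rng a m.-1 ++ m :: rng m.+1 b.
Proof.
move=> h0 /andP[h1 h2]; rewrite /rng (_ : b.+1 - a = (m.-1.+1 - a) + (b.+1 - m)); last by lia.
rewrite iotaD (_ : a + (m.-1.+1 - a) = m); last by lia.
by rewrite (_ : b.+1 - m = (b.+1 - m.+1).+1) //; lia.
Qed.

Lemma first_filter (p : pred nat) a b x : a <= x <= b -> p x ->
  (forall y, a <= y < x -> ~~ p y) -> nth 0 (filter p (rng a b)) 0 = x.
Proof.
rewrite /rng; move=> hx px hy.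
have : x - a < b.+1 - a by lia.
have : a + (x - a) = x by lia.
clear hx; move: hy; move: (x - a) (b.+1 - a) => d m.
elim: d m a => [|d IH] [|m] a hy ea hm //=.
  by rewrite addn0 in ea; subst; rewrite px.
have -> : p a = false by apply/negbTE/hy; lia.
apply: IH => //; [move=> y hy'; apply: hy; lia | lia].
Qed.

Lemma map_rev_rng n : map (fun j => n.+1 - j) (rng 1 n) = rev (rng 1 n).
Proof.
apply: (@eq_from_nth _ 0); first by rewrite size_map size_rev.
move=> i; rewrite size_map /rng size_iota subn1 /= => hi.
rewrite (nth_map 0) ?size_iota // nth_rev ?size_iota // !nth_iota //; lia.
Qed.

Lemma alt_ok_rev s : alt_ok (rev s) = alt_ok s.
Proof.
rewrite /alt_ok all_rev filter_rev.
set t := filter _ s.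
have hl u : head 0%R (rev u) = last 0%R u.
  by case/lastP: u => // u x; rewrite rev_rcons last_rcons.
have hh u : last 0%R (rev u) = head 0%R u.
  by case: u => // x u; rewrite rev_cons last_rcons.
rewrite hl hh rev_sorted.
case: (all _ s) => //=; case: (last 0%R t == 1%R); case: (head 0%R t == 1%R) => //=.
case: t => // x t /=; apply: eq_path => u v /=.
by apply/eqP/eqP => ->; rewrite opprK.
Qed.

Lemma alt_vals s x : alt_ok s -> x \in s -> (x == 1%R) || (x == 0%R) || (x == (-1)%R).
Proof. by case/andP => /allP h _ /h. Qed.

Lemma alt_noneg s : alt_ok s -> (-1)%R \notin s -> count (fun x => x != 0%R) s = 1.
Proof.
move=> ha hn; rewrite -size_filter.
have ht : forall x, x \in [seq x <- s | x != 0%R] -> x = 1%R.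
  move=> x; rewrite mem_filter => /andP[nz xs].
  move: (alt_vals ha xs); rewrite (negbTE nz) orbF => /orP[/eqP //|/eqP e].
  by rewrite -e xs in hn.
case/andP: ha => _; move: ht; case: (filter _ s) => [|x [|y t]] ht //=.
case/and4P=> _ _ /eqP e _.
by move: e; rewrite (ht x) ?inE ?eqxx // (ht y) ?inE ?eqxx ?orbT.
Qed.

Lemma alt_first s1 s2 : alt_ok (s1 ++ (-1)%R :: s2) -> (-1)%R \notin s1 -> 1%R \in s1.
Proof.
move=> ha hn; apply/negPn/negP => h1.
have z : [seq x <- s1 | x != 0%R] = [::].
  apply/eqP; rewrite -(negbK (_ == _)) -has_filter; apply/hasPn => x xs.
  move: (alt_vals ha (x:=x)); rewrite mem_cat xs => /(_ isT).
  case/orP=> [/orP[]|] /eqP e; rewrite e ?eqxx //= in xs *.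
  - by rewrite xs in h1.
  - by rewrite xs in hn.
by case/andP: ha => _; rewrite filter_cat z /=.
Qed.

Lemma count1 (T : eqType) (s : seq T) (p : pred T) x y : uniq s -> x \in s -> p x ->
  count p s = 1 -> y \in s -> y != x -> ~~ p y.
Proof.
elim: s => //= z s IH /andP[zs us]; rewrite !inE => hx px.
case: (eqVneq x z) hx => [<- _|_ /= hx].
  rewrite px add1n => [[/eqP]]; rewrite -leqn0 leqNgt -has_count => /hasPn hs.
  by case/orP=> [/eqP->|ys]; [rewrite eqxx|move=> _; apply: hs].
case pz: (p z) => /=.
  by rewrite add1n => [[/eqP]]; rewrite -leqn0 leqNgt -has_count => /hasPn /(_ x hx); rewrite px.
rewrite add0n => hc /orP[/eqP-> _|ys yx]; last exact: IH.
by rewrite pz.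
Qed.

Lemma single_le (T : eqType) (s : seq T) (F : T -> nat) x :
  uniq s -> x \in s -> F x <= \sum_(i <- s) F i.
Proof. by move=> u xs; rewrite (bigD1_seq x) //= leq_addr. Qed.

Lemma two_le (T : eqType) (s : seq T) (F : T -> nat) x y :
  uniq s -> x \in s -> y \in s -> y != x -> F x + F y <= \sum_(i <- s) F i.
Proof.
move=> u xs ys yx; rewrite (bigD1_seq x) //= leq_add2l -big_filter.
by apply: single_le; [exact: filter_uniq | rewrite mem_filter yx].
Qed.

Section M.
Variable n : nat.
Implicit Types M : 'M[int]_n.

Lemma asm_row M i : isASM M -> 0 < i <= n -> alt_ok (rowseq M i).
Proof. by case/andP => /allP h _ hi; apply: h; rewrite mem_rng. Qed.
Lemma asm_col M j : isASM M -> 0 < j <= n -> alt_ok (colseq M j).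
Proof. by case/andP => _ /allP h hi; apply: h; rewrite mem_rng. Qed.

Lemma asm_vals M i j : isASM M ->
  (ent M i j == 1%R) || (ent M i j == 0%R) || (ent M i j == (-1)%R).
Proof.
move=> hA; case: (eqVneq (ent M i j) 0%R) => [->|nz]; first by apply/orP; left; apply/orP; right.
case/andP: (ent_out nz) => hi hj.
have hx : ent M i j \in rowseq M i by apply/mapP; exists j => //; rewrite mem_rng.
have := alt_vals (asm_row hA hi) hx.
by rewrite (negbTE nz).
Qed.

Lemma neg_uniq M i j i' j' : inA1 M -> ent M i j = (-1)%R -> ent M i' j' = (-1)%R ->
  i = i' /\ j = j'.
Proof.
case/andP=> _ /eqP hc e e'.
have nz : ent M i j != 0%R by rewrite e.
have nz' : ent M i' j' != 0%R by rewrite e'.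
case/andP: (ent_out nz) => hi hj; case/andP: (ent_out nz') => hi' hj'.
have ri : i \in rng 1 n by rewrite mem_rng. have ri' : i' \in rng 1 n by rewrite mem_rng.
have rj : j \in rng 1 n by rewrite mem_rng. have rj' : j' \in rng 1 n by rewrite mem_rng.
set G := fun i => \sum_(j <- rng 1 n) (ent M i j == (-1)%R : nat).
have Gi : 0 < G i.
  have := single_le (fun j => (ent M i j == (-1)%R : nat)) (rng_uniq 1 n) rj.
  by rewrite /= e eqxx.
have Gi' : 0 < G i'.
  have := single_le (fun j => (ent M i' j == (-1)%R : nat)) (rng_uniq 1 n) rj'.
  by rewrite /= e' eqxx.
case: (eqVneq i' i) => [ei|ne].
  subst i'; split => //; apply/eqP; apply: contraT => ne; rewrite eq_sym in ne.
  have := two_le (fun j => (ent M i j == (-1)%R : nat)) (rng_uniq 1 n) rj rj' ne.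
  rewrite /= e e' eqxx => h2.
  have := single_le G (rng_uniq 1 n) ri; rewrite -/G -/(negcount M) hc /G; lia.
have := two_le G (rng_uniq 1 n) ri ri' ne; rewrite -/(negcount M) hc; lia.
Qed.

Lemma neg_exists M : inA1 M -> exists i j, ent M i j = (-1)%R.
Proof.
case/andP=> _ /eqP hc.
have pos (s : seq nat) (F : nat -> nat) : 0 < \sum_(i <- s) F i -> exists2 i, i \in s & 0 < F i.
  case: (boolP (has (fun i => 0 < F i) s)) => [/hasP[i ? ?]|/hasPn h]; first by exists i.
  by rewrite big1_seq // => i /h; rewrite lt0n negbK => /eqP.
have := pos _ _ (eq_leq (esym hc)); case=> i _ /pos[j _].
by case: eqP => // e _; exists i, j.
Qed.

Lemma crow_ocol M i j : inA1 M -> ent M i j = (-1)%R -> crow M = i /\ ocol M = j.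
Proof.
move=> hA e.
have nz : ent M i j != 0%R by rewrite e.
case/andP: (ent_out nz) => hi hj.
have ci : crow M = i.
  apply: first_filter => //.
    by apply/hasP; exists j; rewrite ?mem_rng ?e.
  move=> y /andP[_ yi]; apply/hasP => -[j' _ /eqP e'].
  by case: (neg_uniq hA e' e) => ey _; rewrite ey ltnn in yi.
split => //; rewrite /ocol ci; apply: first_filter => //; first by rewrite e.
move=> y /andP[_ yj]; apply/eqP => e'.
by case: (neg_uniq hA e' e) => _ ey; rewrite ey ltnn in yj.
Qed.

Lemma last_filter_mem (p : pred nat) s : has p s -> last 0 (filter p s) \in filter p s.
Proof.
rewrite has_filter; case: (filter p s) => // x t _.
by rewrite /= (mem_last x t).
Qed.

Lemma single_le_int (s : seq nat) (F : nat -> int) x :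
  uniq s -> x \in s -> (forall y, y \in s -> (0 <= F y)%R) -> (F x <= \sum_(i <- s) F i)%R.
Proof.
move=> u xs h; rewrite (bigD1_seq x) //= lerDl -big_filter big_seq sumr_ge0 // => i.
by rewrite mem_filter => /andP[_ /h].
Qed.

Lemma rowseqE M i : rowseq M i = map (ent M i) (rng 1 n).
Proof. by []. Qed.
Lemma colseqE M j : colseq M j = map (fun i => ent M i j) (rng 1 n).
Proof. by []. Qed.

Lemma struct M : inA1 M ->
  let c := crow M in let o := ocol M in
  [/\ ent M c o = (-1)%R, 0 < c <= n, 0 < o <= n &
      forall i j, ent M i j = (-1)%R -> i = c /\ j = o].
Proof.
move=> hA; case: (neg_exists hA) => i [j e].
case: (crow_ocol hA e) => ci oj /=; rewrite ci oj.
have nz : ent M i j != 0%R by rewrite e.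
case/andP: (ent_out nz) => hi hj; split => // i' j' e'.
exact: neg_uniq hA e' e.
Qed.

Lemma line_noneg (f : nat -> int) x y : alt_ok (map f (rng 1 n)) ->
  (forall j, f j != (-1)%R) -> 0 < x <= n -> f x = 1%R -> 0 < y <= n -> y != x -> f y = 0%R.
Proof.
move=> ha hn hx fx hy yx.
have hc := alt_noneg ha (introN (@mapP _ _ _ _ _) (fun '(ex_intro2 j _ e) => negP (hn j) (introT eqP (esym e)))).
rewrite count_map in hc.
have := count1 (rng_uniq 1 n) (x:=x) (y:=y) (p := fun j => f j != 0%R).
rewrite !mem_rng fx /= => /(_ hx isT hc hy yx); by rewrite negbK => /eqP.
Qed.

Lemma line_first (f : nat -> int) c : alt_ok (map f (rng 1 n)) -> 0 < c <= n ->
  f c = (-1)%R -> (forall j, j != c -> f j != (-1)%R) ->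
  exists2 j, 0 < j < c & f j = 1%R.
Proof.
move=> ha hc fc hn.
rewrite (@rng_split 1 c n (andP hc).1 hc) in ha.
rewrite map_cat /= fc in ha.
have : (-1)%R \notin map f (rng 1 c.-1).
  apply/mapP => -[j]; rewrite mem_rng => hj e.
  suff jc : j != c by move: (hn j jc); rewrite e eqxx.
  by apply/eqP => ej; subst j; case/andP: hc => ? ?; lia.
move/(alt_first ha) => /mapP[j]; rewrite mem_rng => hj e.
by exists j => //; lia.
Qed.

Lemma key M : inA1 M -> neutral M ->
  0 < orow M < n /\
  ell M = (ga M (n.+1 - orow M) - ga M (n - orow M) - 1)%R.
Proof.
move=> hA hneu; have hS := hA; case/andP: hS => hasm _.
case: (struct hA) => /=; set c := crow M; set o := ocol M => eco hc ho huniq.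
set F := ent M.
have [i1 hi1 Fi1] : exists2 i, 0 < i < c & F i o = 1%R.
  apply: (line_first (f := fun i => F i o) (asm_col hasm ho) hc eco).
  by move=> j jc; apply/eqP => /huniq [] /eqP; rewrite (negbTE jc).
have hr : orow M \in [seq i <- rng 1 c.-1 | F i o == 1%R].
  apply: last_filter_mem; apply/hasP; exists i1; [rewrite mem_rng; lia | exact/eqP].
rewrite -/(orow M) in hr.
set r := orow M in hr *.
move: hr; rewrite mem_filter mem_rng => /andP[/eqP Fro hr].
have cr : c = r.+1 by apply/eqP.
have hrn : 0 < r < n by lia.
split => //.
have rowr : forall j, 0 < j <= n -> j != o -> F r j = 0%R.
  move=> j hj jo; apply: (line_noneg (f := F r) (asm_row hasm (_ : 0 < r <= n)) _ ho Fro hj jo).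
    lia.
  by move=> j'; apply/eqP => /huniq [] rc; lia.
have gar : ga M (n.+1 - r) = cellsum M r.+1 n 1 o.-1.
  rewrite /ga (_ : n.+1 - (n.+1 - r) = r); last lia.
  congr (cellsum _ _ _ _ _.-1); apply: first_filter => //; first by rewrite -/F Fro.
  move=> y hy; rewrite -/F rowr ?eqxx //; [lia|apply/eqP => yo; lia].
have [j1 hj1 Fj1] : exists2 j, 0 < j < o & F c j = 1%R.
  apply: (line_first (f := F c) (asm_row hasm hc) ho eco).
  by move=> j jo; apply/eqP => /huniq [] _ /eqP; rewrite (negbTE jo).
have exL : exists j, (0 < j) && (F c j == 1%R) by exists j1; rewrite Fj1 eqxx andbT; lia.
case: (ex_minnP exL) => L /andP[L0 /eqP FL] Lmin.
have Lj1 : L <= j1 by apply: Lmin; rewrite Fj1 eqxx andbT; lia.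
have Lbefore : forall y, 0 < y < L -> F c y = 0%R.
  move=> y hy; have := @asm_vals M c y hasm; rewrite -/F.
  case/orP=> [/orP[]|] /eqP e //.
    by have := Lmin y; rewrite e eqxx andbT; case/andP: hy => -> ? /(_ isT); lia.
  by case: (huniq _ _ e) => _ yo; lia.
have gac : ga M (n - r) = cellsum M c.+1 n 1 L.-1.
  rewrite /ga (_ : n.+1 - (n - r) = c); last lia.
  congr (cellsum _ _ _ _ _.-1); apply: first_filter; first lia; first by rewrite -/F FL.
  by move=> y hy; rewrite -/F Lbefore //; lia.
have lr : leadrow M = c.
  apply: first_filter; first lia.
    by apply/hasP; exists L; [rewrite mem_rng; lia | exact/eqP].
  move=> y hy; lia.
have lc : leadcol M = L.
  rewrite /leadcol lr; apply: first_filter; first lia; first by rewrite -/F FL.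
  by move=> y hy; rewrite -/F Lbefore //; lia.
have colL : forall i, 0 < i <= n -> i != c -> F i L = 0%R.
  move=> i hi ic; apply: (line_noneg (f := fun i => F i L) (asm_col hasm (_ : 0 < L <= n)) _ hc FL hi ic).
    lia.
  by move=> i'; apply/eqP => /huniq [] _ Lo; lia.
have e1 : (\sum_(i <- rng c n) \sum_(j <- rng 1 o.-1) F i j =
    \sum_(i <- rng c.+1 n) \sum_(j <- rng 1 L.-1) F i j + 1 +
    \sum_(i <- rng c n) \sum_(j <- rng L.+1 o.-1) F i j)%R.
  rewrite (@rng_split 1 L o.-1 L0); last lia.
  under eq_bigr do rewrite big_cat big_cons /=.
  rewrite big_split big_split /=.
  rewrite (@rng_cons c n) ?(andP hc).2 // !big_cons.
  rewrite big1_seq; last by move=> j; rewrite mem_rng => hj; rewrite Lbefore //; lia.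
  have -> : (\sum_(i <- rng c.+1 n) F i L = 0)%R.
    by rewrite big1_seq // => i; rewrite mem_rng => hi; rewrite colL //; [lia | apply/eqP => ic; lia].
  rewrite -/F FL.
  by rewrite add0r addr0 !addrA.
rewrite /ell lc -/r gar gac /cellsum -cr.
rewrite -/F; change (ocol M) with o; rewrite e1; lia.
Qed.
Lemma pn_neutral M : inPN M -> Echarge M = 0%R -> neutral M.
Proof.
case/andP=> hA /orP[hp|//] hE; exfalso.
have hS := hA; case/andP: hS => hasm _.
case: (struct hA) => /=; set c := crow M; set o := ocol M => eco hc ho huniq.
have nn : forall i j, i != c -> (0 <= ent M i j)%R.
  move=> i j ic; have := @asm_vals M i j hasm; case/orP=> [/orP[]|] /eqP e; rewrite e //.
  by case: (huniq _ _ e) => ei; rewrite ei eqxx in ic.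
move: hE; rewrite /Echarge hp; case/andP: hp => hrc /hasP[j hj /eqP Fj].
rewrite /cellsum => hE.
have hrow : c.-1 \in rng (orow M).+1 (crow M).-1 by rewrite mem_rng; lia.
have := single_le_int (F := fun i => (\sum_(j <- rng (ocol M).+1 n) ent M i j)%R) (rng_uniq _ _) hrow.
rewrite hE => /(_ _) h.
have : (1 <= 0 :> int)%R.
  apply: le_trans (h _); last first.
    move=> y; rewrite mem_rng => hy; rewrite big_seq sumr_ge0 // => j' _; apply: nn.
    by apply/eqP => yc; rewrite -/c in hy; lia.
  rewrite -Fj; apply: (single_le_int (F := fun j => ent M c.-1 j)) (rng_uniq _ _) hj _.
  by move=> j' _; apply: nn; apply/eqP; lia.
by [].
Qed.
Lemma rowseq_flip M i : rowseq (flip M) i = rev (rowseq M i).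
Proof.
rewrite !rowseqE -map_rev -map_rev_rng -map_comp; apply: eq_map => j /=.
by rewrite ent_flip.
Qed.

Lemma colseq_flip M j : 0 < j <= n -> colseq M j = colseq (flip M) (n.+1 - j).
Proof.
move=> hj; rewrite !colseqE; apply: eq_map => i /=.
by rewrite ent_flip subKn //; lia.
Qed.

Lemma flip_inA1 M : inA1 (flip M) -> inA1 M.
Proof.
case/andP=> /andP[/allP hr /allP hc] hn; apply/andP; split; [apply/andP; split|].
- apply/allP => i hi; rewrite -alt_ok_rev -rowseq_flip; exact: hr.
- apply/allP => j hj; move: (hj); rewrite mem_rng => hj'.
  rewrite colseq_flip //; apply: hc; rewrite mem_rng; lia.
- move: hn; rewrite /negcount; congr (_ == _); apply: eq_bigr => i _.
  under eq_bigr do rewrite ent_flip.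
  rewrite -(big_map (fun j => n.+1 - j) xpredT (fun j => (ent M i j == (-1)%R : nat))).
  by rewrite map_rev_rng big_rev.
Qed.

Lemma flip_neutral M : inA1 (flip M) -> neutral (flip M) -> neutral M.
Proof.
move=> hF; have hM := flip_inA1 hF.
case: (struct hM) => /=; set c := crow M; set o := ocol M => eco hc ho huniq.
have e' : ent (flip M) c (n.+1 - o) = (-1)%R by rewrite ent_flip subKn //; lia.
case: (crow_ocol hF e') => cF oF.
rewrite /neutral /orow cF oF.
suff -> : [seq i <- rng 1 c.-1 | ent (flip M) i (n.+1 - o) == 1%R] =
          [seq i <- rng 1 c.-1 | ent M i o == 1%R] by [].
by apply: eq_filter => i; rewrite ent_flip subKn //; lia.
Qed.
End M.

Unset Implicit Arguments.
Theorem corollary1 (n : nat) (A N : 'M[int]_n) (E : int) :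
  inA1 A -> LambdaRel A N E ->
  forall (k : nat) (a : seq int) (b beta : int),
    gtable (N, E) = (k, a, b, beta) ->
    gtable (xi (N, E)) =
      (k, a, b, (b - beta + nth 0 a k.-1 - nth 0 a k.-2 - 1)%R).
Proof.
move=> _ hLR.
have [hA hneu] : inA1 N /\ neutral N.
  case: hLR => [[_ hPN _ hD] | [_ _ [_ hPN _ hD]]].
    split; first by case/andP: hPN.
    by apply: pn_neutral hPN _; case: hD.
  have hF : inA1 (flip N) by case/andP: hPN.
  split; first exact: flip_inA1.
  by apply: flip_neutral => //; apply: pn_neutral hPN _; case: hD.
case: (key hA hneu) => hr hell.
move=> k a b beta; rewrite /gtable /xi /= => -[ek ea eb ebeta].
rewrite -ek -ea -eb -ebeta.
have e1 : (n.+1 - orow N).-1 = n - orow N by lia.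
rewrite e1 (nth_map 0) /rng ?size_iota; last by lia.
rewrite (nth_map 0) ?size_iota; last by lia.
rewrite !nth_iota; try lia.
rewrite (_ : 1 + (n - orow N) = n.+1 - orow N); last by lia.
rewrite (_ : 1 + (n - orow N).-1 = n - orow N); last by lia.
rewrite hell; congr (_, _); lia.
Qed.
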